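(* Let $\mathbf{D}=\{(x_i,y_i):i=0,\dots,N\}$ and $\bar{\mathbf{D}}=\{(x_i,\bar y_i):i=0,\dots,N\}$ be two data sets with $x_0<x_1<\dots<x_N$, and let $f,\hat f\in C(I)$ with $f(x_i)=y_i$, $\hat f(x_i)=\bar y_i$. Let $b_r,\hat b_r\in C(I)$ ($r\in\mathbb{N}$) with $b_r(x_0)=f(x_0)$, $b_r(x_N)=f(x_N)$, $\hat b_r(x_0)=\hat f(x_0)$, $\hat b_r(x_N)=\hat f(x_N)$, $\sup_r\|b_r\|_\infty<\infty$, $\sup_r\|\hat b_r\|_\infty<\infty$. Let $f^\alpha_b$ be the non-stationary $\alpha$-fractal function of $f$ with base functions $b_r$, and $\bar f^\alpha_b$ the non-stationary $\alpha$-fractal function of $\hat f$ with base functions $\hat b_r$, both with the same scaling functions $\alpha_{i,r}$. Then $$\|f^\alpha_b-\bar f^\alpha_b\|_\infty\le\frac{\|f-\hat f\|_\infty+\|\alpha\|_\infty\sup_{r\in\mathbb{N}}\|b_r-\hat b_r\|_\infty}{1-\|\alpha\|_\infty}.$$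
   Context: $I=[x_0,x_N]$, $I_i=[x_{i-1},x_i]$, $l_i:I\to I_i$ the affine bijection $l_i(x)=\frac{x_i-x_{i-1}}{x_N-x_0}x+\frac{x_Nx_{i-1}-x_0x_i}{x_N-x_0}$, $Q_i=l_i^{-1}$. Scaling functions $\alpha_{i,r}:I\to\mathbb{R}$ ($i=1,\dots,N$, $r\in\mathbb{N}$) are continuous with $\|\alpha\|_\infty:=\sup_r\max_i\|\alpha_{i,r}\|_\infty<1$. Non-stationary $\alpha$-fractal function of $f\in C(I)$ with base functions $b=\{b_r\}$ (continuous, $b_r(x_0)=f(x_0)$, $b_r(x_N)=f(x_N)$, $\sup_r\|b_r\|_\infty<\infty$): with $C_f(I)=\{g\in C(I):g(x_0)=f(x_0),g(x_N)=f(x_N)\}$ and $(T^{\alpha_r}g)(x)=f(x)+\alpha_{i,r}(Q_i(x))(g-b_r)(Q_i(x))$ for $x\in I_i$, it is the uniform limit, independent of $g\in C_f(I)$, of $T^{\alpha_1}\circ\cdots\circ T^{\alpha_r}g$ as $r\to\infty$. (It interpolates the points $(x_i,f(x_i))$.) *)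

(* Defs.v *)
From HB Require Import structures.
From mathcomp Require Import all_boot all_order all_algebra.
From mathcomp Require Import all_classical all_reals all_analysis.
Set Implicit Arguments. Unset Strict Implicit. Unset Printing Implicit Defensive.
Import Order.TTheory GRing.Theory Num.Theory.
Import numFieldNormedType.Exports.
Local Open Scope classical_set_scope.
Local Open Scope ring_scope.

Section NSFractal.
Variable R : realType.

Definition Iset (a b : R) : set R := `[a, b]%classic.

Definition supnorm (a b : R) (g : R -> R) : R :=
  sup [set `|g x| | x in Iset a b].

(* l_i : I -> I_i the affine bijection, Q_i its inverse. *)
Definition lmap (xs : nat -> R) (N i : nat) (x : R) : R :=
  (xs i - xs i.-1) / (xs N - xs 0%N) * x
  + (xs N * xs i.-1 - xs 0%N * xs i) / (xs N - xs 0%N).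

Definition Qmap (xs : nat -> R) (N i : nat) (y : R) : R :=
  xs 0%N + (xs N - xs 0%N) / (xs i - xs i.-1) * (y - xs i.-1).

(* Index i in {1,..,N} of the subinterval I_i = [x_{i-1}, x_i] used for x:
   the least i >= 1 with x <= x_i. (At interior nodes both adjacent
   definitions agree on C_f(I), so this choice is immaterial.) *)
Definition cell (xs : nat -> R) (N : nat) (x : R) : nat :=
  (find (fun j => x <= xs j.+1) (iota 0 N)).+1.

Definition Top (xs : nat -> R) (N : nat) (f : R -> R)
  (alpha : nat -> nat -> R -> R) (b : nat -> R -> R) (r : nat)
  (g : R -> R) : R -> R :=
  fun x => let i := cell xs N x in
           let q := Qmap xs N i x in
           f x + alpha i r q * (g q - b r q).

(* compT r g = T^{alpha_0} o T^{alpha_1} o ... o T^{alpha_{r-1}} g *)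
Fixpoint compT (xs : nat -> R) (N : nat) (f : R -> R)
  (alpha : nat -> nat -> R -> R) (b : nat -> R -> R) (r : nat)
  (g : R -> R) : R -> R :=
  match r with
  | 0 => g
  | r'.+1 => compT xs N f alpha b r' (Top xs N f alpha b r' g)
  end.

Definition is_ns_fractal (xs : nat -> R) (N : nat) (f : R -> R)
  (alpha : nat -> nat -> R -> R) (b : nat -> R -> R) (F : R -> R) : Prop :=
  forall g : R -> R,
    {within Iset (xs 0%N) (xs N), continuous g} ->
    g (xs 0%N) = f (xs 0%N) -> g (xs N) = f (xs N) ->
    forall e : R, 0 < e -> exists M : nat, forall r : nat, (M <= r)%N ->
      forall x, Iset (xs 0%N) (xs N) x -> `|compT xs N f alpha b r g x - F x| < e.

Definition alpha_norms (xs : nat -> R) (N : nat)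
  (alpha : nat -> nat -> R -> R) : set R :=
  [set supnorm (xs 0%N) (xs N) (alpha i r) | i in [set i | (1 <= i <= N)%N]
                                         & r in [set: nat]].

Definition alpha_norm (xs : nat -> R) (N : nat)
  (alpha : nat -> nat -> R -> R) : R := sup (alpha_norms xs N alpha).

End NSFractal.

(* Main.v *)
Require Import Defs.
From HB Require Import structures.
From mathcomp Require Import all_boot all_order all_algebra.
From mathcomp Require Import all_classical all_reals all_analysis.
From mathcomp Require Import ring lra.
Import Order.TTheory GRing.Theory Num.Theory.
Import numFieldNormedType.Exports.
Local Open Scope classical_set_scope.
Local Open Scope ring_scope.

Lemma xs_mono (R : realType) (N : nat) (xs : nat -> R) :
  (forall i : nat, (i < N)%N -> xs i < xs i.+1) ->
  forall i j, (i <= j <= N)%N -> xs i <= xs j.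
Proof.
move=> inc i j /andP[]; elim: j => [|j IH]; first by rewrite leqn0 => /eqP->.
rewrite leq_eqVlt => /orP[/eqP->//|]; rewrite ltnS => ij jN.
apply: le_trans (IH ij (ltnW jN)) (ltW (inc _ jN)).
Qed.

Lemma cell_prop (R : realType) (N : nat) (xs : nat -> R) x :
  (0 < N)%N -> (forall i : nat, (i < N)%N -> xs i < xs i.+1) ->
  Iset (xs 0%N) (xs N) x ->
  [/\ (1 <= cell xs N x <= N)%N, xs (cell xs N x).-1 <= x & x <= xs (cell xs N x)].
Proof.
move=> N0 inc; rewrite /Iset /= in_itv /= => /andP[x0 xN].
rewrite /cell /=.
set P := (fun j : nat => x <= xs j.+1).
have hasP : has P (iota 0 N).
  apply/hasP; exists N.-1; first by rewrite mem_iota /= add0n prednK // leqnn andbT.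
  by rewrite /P prednK.
have jlt : (find P (iota 0 N) < N)%N by rewrite -[X in (_ < X)%N](size_iota 0 N) -has_find.
split.
- by rewrite /= jlt.
- case E: (find P (iota 0 N)) => [|j] //=.
  have := @before_find _ 0%N P (iota 0 N) j; rewrite E ltnSn => /(_ isT).
  rewrite nth_iota; last by rewrite -E ltnW.
  by rewrite /P add0n /= => /negbT; rewrite -ltNge => /ltW.
- have := nth_find 0%N hasP; rewrite nth_iota // add0n.
Qed.

Lemma Qmap_in (R : realType) (N : nat) (xs : nat -> R) x :
  (0 < N)%N -> (forall i : nat, (i < N)%N -> xs i < xs i.+1) ->
  Iset (xs 0%N) (xs N) x ->
  Iset (xs 0%N) (xs N) (Qmap xs N (cell xs N x) x).
Proof.
move=> N0 inc Ix; have [/andP[c1 cN] lo hi] := cell_prop _ _ _ _ N0 inc Ix.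
set i := cell xs N x in c1 cN lo hi *.
have lt : xs i.-1 < xs i by rewrite -{2}(prednK c1); apply: inc; rewrite prednK.
have m0 : xs 0%N <= xs i.-1 by apply: (xs_mono _ _ _ inc); rewrite /= (leq_trans (leq_pred _) cN).
have mN : xs i <= xs N by apply: (xs_mono _ _ _ inc); rewrite cN leqnn.
rewrite /Iset /= in_itv /= /Qmap.
have d0 : 0 < xs i - xs i.-1 by rewrite subr_gt0.
set t := (y in xs 0%N + y).
have -> : t = (xs N - xs 0%N) * ((x - xs i.-1) / (xs i - xs i.-1)) by rewrite /t mulrA mulrAC.
have t0 : 0 <= (x - xs i.-1) / (xs i - xs i.-1) by rewrite divr_ge0 // ?subr_ge0 // ltW.
have t1 : (x - xs i.-1) / (xs i - xs i.-1) <= 1 by rewrite ler_pdivrMr // mul1r lerB.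
have NN : 0 <= xs N - xs 0%N by rewrite subr_ge0 (le_trans m0) // (le_trans (ltW lt)).
apply/andP; split; first by rewrite lerDl mulr_ge0.
rewrite -lerBrDl ler_piMr //.
Qed.

Lemma cont_bnd (R : realType) (a b : R) (g : R -> R) :
  {within Iset a b, continuous g} ->
  has_ubound [set `|g x| | x in Iset a b].
Proof.
move=> cg.
have cpt : compact (Iset a b) by exact: segment_compact.
have /compact_bounded[M [_ mrt]] := continuous_compact cg cpt.
exists (`|M| + 1) => _ [x Ix <-].
apply: (mrt (`|M| + 1)); last by exists x.
by apply: (le_lt_trans (ler_norm M)); rewrite ltrDl.
Qed.

Lemma le_supnorm (R : realType) (a b : R) (g : R -> R) x :
  {within Iset a b, continuous g} -> Iset a b x ->
  `|g x| <= supnorm a b g.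
Proof.
move=> cg Ix; apply: ub_le_sup; [exact: cont_bnd | by exists x].
Qed.

Lemma le_supnorm_gen (R : realType) (a b : R) (g : R -> R) x :
  has_ubound [set `|g x| | x in Iset a b] -> Iset a b x ->
  `|g x| <= supnorm a b g.
Proof. by move=> hb Ix; apply: ub_le_sup => //; exists x. Qed.
Arguments le_supnorm_gen {R a b g x}.

Arguments cont_bnd {R a b g}.
Lemma supnorm_ge0 (R : realType) (a b : R) (g : R -> R) x :
  has_ubound [set `|g x| | x in Iset a b] -> Iset a b x ->
  0 <= supnorm a b g.
Proof. by move=> hb Ix; apply: le_trans (le_supnorm_gen hb Ix). Qed.
Arguments supnorm_ge0 {R a b g x}.

Lemma diff_bnd (R : realType) (a b : R) (g h : R -> R) :
  {within Iset a b, continuous g} -> {within Iset a b, continuous h} ->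
  has_ubound [set `|(g \- h) x| | x in Iset a b].
Proof.
move=> cg ch; have [Mg hg] := cont_bnd cg; have [Mh hh] := cont_bnd ch.
exists (Mg + Mh) => _ [x Ix <-] /=.
apply: le_trans (ler_normB _ _) _; apply: lerD; [apply: hg | apply: hh]; by exists x.
Qed.

Arguments diff_bnd {R a b g h}.

Theorem mainTheorem8 (R : realType) (N : nat) (xs : nat -> R)
  (y ybar : nat -> R) (f fhat : R -> R)
  (alpha : nat -> nat -> R -> R) (b bhat : nat -> R -> R) (F Fbar : R -> R) :
  (0 < N)%N ->
  (forall i : nat, (i < N)%N -> xs i < xs i.+1) ->
  {within Iset (xs 0%N) (xs N), continuous f} ->
  {within Iset (xs 0%N) (xs N), continuous fhat} ->
  (forall i : nat, (i <= N)%N -> f (xs i) = y i) ->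
  (forall i : nat, (i <= N)%N -> fhat (xs i) = ybar i) ->
  (forall r : nat, {within Iset (xs 0%N) (xs N), continuous b r}) ->
  (forall r : nat, {within Iset (xs 0%N) (xs N), continuous bhat r}) ->
  (forall r : nat, b r (xs 0%N) = f (xs 0%N) /\ b r (xs N) = f (xs N)) ->
  (forall r : nat, bhat r (xs 0%N) = fhat (xs 0%N) /\ bhat r (xs N) = fhat (xs N)) ->
  has_ubound [set supnorm (xs 0%N) (xs N) (b r) | r in [set: nat]] ->
  has_ubound [set supnorm (xs 0%N) (xs N) (bhat r) | r in [set: nat]] ->
  (forall i r : nat, (1 <= i <= N)%N ->
     {within Iset (xs 0%N) (xs N), continuous alpha i r}) ->
  has_ubound (alpha_norms xs N alpha) ->
  alpha_norm xs N alpha < 1 ->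
  is_ns_fractal xs N f alpha b F ->
  is_ns_fractal xs N fhat alpha bhat Fbar ->
  supnorm (xs 0%N) (xs N) (F \- Fbar) <=
    (supnorm (xs 0%N) (xs N) (f \- fhat)
     + alpha_norm xs N alpha
       * sup [set supnorm (xs 0%N) (xs N) (b r \- bhat r) | r in [set: nat]])
    / (1 - alpha_norm xs N alpha).
Proof.
move=> N0 inc cf cfh _ _ cb cbh _ _ [ub1 hub1] [ub2 hub2] cal hal al1 fF fFb.
set I := Iset (xs 0%N) (xs N).
have le0N : xs 0%N <= xs N by apply: (xs_mono _ _ _ inc); rewrite leqnn.
have I0 : I (xs 0%N) by rewrite /I /Iset /= in_itv /= lexx le0N.
set a := alpha_norm xs N alpha.
have a0 : 0 <= a.
  apply: le_trans (supnorm_ge0 (cont_bnd (cal 1%N 0%N _)) I0) _; first by rewrite leqnn N0.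
  apply: ub_le_sup => //; exists 1%N; first by rewrite /= N0.
  by exists 0%N.
have ha : forall i r q, (1 <= i <= N)%N -> I q -> `|alpha i r q| <= a.
  move=> i r q iN Iq; apply: le_trans (le_supnorm_gen (cont_bnd (cal i r iN)) Iq) _.
  by apply: ub_le_sup => //; exists i => //; exists r.
have hbd : forall r, has_ubound [set `|(b r \- bhat r) x| | x in I].
  by move=> r; apply: diff_bnd.
set SB := [set supnorm (xs 0%N) (xs N) (b r \- bhat r) | r in [set: nat]].
have SBub : has_ubound SB.
  exists (ub1 + ub2) => _ [r _ <-]; apply: ge_sup; first by exists `|(b r \- bhat r) (xs 0%N)|, (xs 0%N).
  move=> _ [x Ix <-] /=; apply: le_trans (ler_normB _ _) _.
  apply: lerD.
    apply: le_trans (le_supnorm_gen (cont_bnd (cb r)) Ix) _; apply: hub1; by exists r.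
  apply: le_trans (le_supnorm_gen (cont_bnd (cbh r)) Ix) _; apply: hub2; by exists r.
set B := sup SB.
have hB : forall r q, I q -> `|b r q - bhat r q| <= B.
  move=> r q Iq; apply: le_trans (le_supnorm_gen (hbd r) Iq) _.
  by apply: ub_le_sup => //; exists r.
have B0 : 0 <= B by apply: le_trans (hB 0%N _ I0).
have hfb : has_ubound [set `|(f \- fhat) x| | x in I] by apply: diff_bnd.
set c := supnorm (xs 0%N) (xs N) (f \- fhat).
have c0 : 0 <= c by apply: supnorm_ge0 hfb I0.
have hc : forall x, I x -> `|f x - fhat x| <= c by move=> x Ix; apply: le_supnorm_gen hfb Ix.
set L := (c + a * B) / (1 - a).
have a1 : 0 < 1 - a by rewrite subr_gt0.
have LE : L * (1 - a) = c + a * B by rewrite /L divfK // gt_eqF.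
have cL : c <= L.
  rewrite ler_pdivlMr // mulrBr mulr1 lerBlDr -addrA lerDl.
  by rewrite addr_ge0 // mulr_ge0.
have L0 : 0 <= L by apply: le_trans cL.
have step : forall r u v, (forall q, I q -> `|u q - v q| <= L) ->
    forall x, I x -> `|Top xs N f alpha b r u x - Top xs N fhat alpha bhat r v x| <= L.
  move=> r u v huv x Ix; rewrite /Top /=.
  have [ci _ _] := cell_prop _ _ _ _ N0 inc Ix.
  have Iq := Qmap_in _ _ _ _ N0 inc Ix.
  set i := cell xs N x in ci Iq *; set q := Qmap xs N i x in Iq *.
  have -> : f x + alpha i r q * (u q - b r q) - (fhat x + alpha i r q * (v q - bhat r q))
        = (f x - fhat x) + alpha i r q * ((u q - v q) - (b r q - bhat r q)) by ring.
  apply: le_trans (ler_normD _ _) _.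
  have -> : L = c + a * (L + B).
    by move: LE; rewrite mulrBr mulr1 mulrDr => LE; rewrite addrCA -LE; ring.
  apply: lerD; first exact: hc.
  rewrite normrM; apply: ler_pM => //; first exact: ha.
  apply: le_trans (ler_normB _ _) _; apply: lerD; [exact: huv | exact: hB].
have iter : forall r u v, (forall q, I q -> `|u q - v q| <= L) ->
    forall x, I x -> `|compT xs N f alpha b r u x - compT xs N fhat alpha bhat r v x| <= L.
  elim=> [|r IH] u v huv x Ix /=; first exact: huv.
  by apply: IH => // q Iq; apply: step.
apply: ge_sup; first by exists `|(F \- Fbar) (xs 0%N)|, (xs 0%N).
move=> _ [x Ix <-] /=.
apply/ler_addgt0Pr => e e0.
have e20 : 0 < e / 2 by rewrite divr_gt0.
have [M1 hM1] := fF f cf erefl erefl _ e20.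
have [M2 hM2] := fFb fhat cfh erefl erefl _ e20.
set r := maxn M1 M2.
have h1 := hM1 r (leq_maxl _ _) x Ix.
have h2 := hM2 r (leq_maxr _ _) x Ix.
have h3 := iter r f fhat (fun q Iq => le_trans (hc q Iq) cL) x Ix.
have -> : F x - Fbar x = - (compT xs N f alpha b r f x - F x)
   + (compT xs N f alpha b r f x - compT xs N fhat alpha bhat r fhat x)
   + (compT xs N fhat alpha bhat r fhat x - Fbar x) by ring.
apply: le_trans (ler_normD _ _) _.
apply: le_trans (lerD (ler_normD _ _) (lexx _)) _.
rewrite normrN.
have -> : L + e = e / 2 + L + e / 2 by field.
by apply: lerD; [apply: lerD => //; apply: ltW|apply: ltW].
Qed.
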